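(* The following statement is false: for all integers $m>a\geq0$ and $n>b\geq0$, an erasure pattern $\mathcal{E}\subseteq[m]\times[n]$ is correctable in the topology $T_{m\times n}(a,b,0)$ if and only if it is regular.
   Context: Positions of vectors in $\mathbb{F}^{mn}$ are identified with $[m]\times[n]$, $[k]=\{1,\dots,k\}$. For linear codes $\mathcal{C}_1\subseteq\mathbb{F}^m,\mathcal{C}_2\subseteq\mathbb{F}^n$, $\mathcal{C}_1\otimes\mathcal{C}_2$ is the row span of the Kronecker product of their generator matrices. A code for the topology $T_{m\times n}(a,b,0)$ is a linear code over a finite field $\mathbb{F}$ whose parity-check matrix is a parity-check matrix of $\mathcal{C}_{\mathsf{col}}\otimes\mathcal{C}_{\mathsf{row}}$, where $\mathcal{C}_{\mathsf{col}}$ is a linear $[m,\geq m-a]$ code and $\mathcal{C}_{\mathsf{row}}$ a linear $[n,\geq n-b]$ code over $\mathbb{F}$; $\mathbb{C}_{m\times n}(a,b,0)$ is the set of these codes (over any finite field). A code corrects an erasure pattern $\mathcal{E}$ if no two distinct codewords agree on all positions outside $\mathcal{E}$; $\mathcal{E}$ is correctable in $T_{m\times n}(a,b,0)$ if some code in $\mathbb{C}_{m\times n}(a,b,0)$ corrects it. An erasure pattern $\mathcal{E}\subseteq[m]\times[n]$ is regular if for all $\mathcal{U}\subseteq[m]$ with $|\mathcal{U}|=u\geq a$ and all $\mathcal{V}\subseteq[n]$ with $|\mathcal{V}|=v\geq b$ one has $|\mathcal{E}\cap(\mathcal{U}\times\mathcal{V})|\leq va+ub-ab$. *)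

(* Defs.v *)
From mathcomp Require Import all_boot all_order all_algebra all_field.
Set Implicit Arguments. Unset Strict Implicit. Unset Printing Implicit Defensive.
Import GRing.Theory.
Local Open Scope ring_scope.

(* Vectors of F^{mn} are functions on positions [m] x [n] (0-based ordinals). *)

Definition kron (F : fieldType) (k1 k2 m n : nat)
  (G1 : 'M[F]_(k1, m)) (G2 : 'M[F]_(k2, n))
  (r : 'I_k1 * 'I_k2) (p : 'I_m * 'I_n) : F :=
  G1 r.1 p.1 * G2 r.2 p.2.

Definition in_tensor_code (F : fieldType) (k1 k2 m n : nat)
  (G1 : 'M[F]_(k1, m)) (G2 : 'M[F]_(k2, n)) (c : 'I_m * 'I_n -> F) : Prop :=
  exists x : 'I_k1 * 'I_k2 -> F,
    forall p, c p = \sum_(r : 'I_k1 * 'I_k2) x r * kron G1 G2 r p.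

Definition corrects (F : fieldType) (m n : nat)
  (code : ('I_m * 'I_n -> F) -> Prop) (E : {set 'I_m * 'I_n}) : Prop :=
  forall c1 c2, code c1 -> code c2 ->
    (forall p, p \notin E -> c1 p = c2 p) -> forall p, c1 p = c2 p.

(* E is correctable in T_{m x n}(a,b,0): some finite field F, some linear
   [m, >= m-a] code C_col (row span of G1) and [n, >= n-b] code C_row
   (row span of G2) such that C_col (x) C_row corrects E. *)
Definition correctable (m n a b : nat) (E : {set 'I_m * 'I_n}) : Prop :=
  exists (F : finFieldType) (k1 k2 : nat)
         (G1 : 'M[F]_(k1, m)) (G2 : 'M[F]_(k2, n)),
    (m - a <= \rank G1)%N /\ (n - b <= \rank G2)%N /\
    corrects (in_tensor_code G1 G2) E.

Definition regular (m n a b : nat) (E : {set 'I_m * 'I_n}) : Prop :=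
  forall (U : {set 'I_m}) (V : {set 'I_n}),
    (a <= #|U|)%N -> (b <= #|V|)%N ->
    (#|E :&: setX U V| <= #|V| * a + #|U| * b - a * b)%N.

(* Main.v *)
Require Import Defs.
From mathcomp Require Import all_boot all_order all_algebra all_field.
Set Implicit Arguments. Unset Strict Implicit. Unset Printing Implicit Defensive.
Import GRing.Theory.
From mathcomp Require Import zify.

Definition o0 : 'I_5 := @Ordinal 5 0 isT.
Definition o1 : 'I_5 := @Ordinal 5 1 isT.
Definition o2 : 'I_5 := @Ordinal 5 2 isT.
Definition o3 : 'I_5 := @Ordinal 5 3 isT.
Definition o4 : 'I_5 := @Ordinal 5 4 isT.

Definition S5 : {set 'I_5 * 'I_5} :=
  setX [set o0; o1] [set o1; o2] :|: setX [set o2; o3] [set o0; o3]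
  :|: [set (o4, o4)].
Definition E5 : {set 'I_5 * 'I_5} := ~: S5.

Lemma card_sum (T : finType) (A : {set T}) : #|A| = \sum_(x : T) (x \in A : nat).
Proof. by rewrite -sum1_card big_mkcond. Qed.

Definition tblE : seq (seq bool) :=
  [:: [:: true; false; false; true; true];
      [:: true; false; false; true; true];
      [:: false; true; true; false; true];
      [:: false; true; true; false; true];
      [:: true; true; true; true; false]].

Lemma regE5 : regular 2 2 E5.
Proof.
move=> U V; rewrite !card_sum.
have -> : \sum_(x : 'I_5 * 'I_5) (x \in E5 :&: setX U V : nat) =
   \sum_(i : 'I_5) \sum_(j : 'I_5) ((i \in U) && (j \in V) && nth false (nth [::] tblE i) j : nat).
  rewrite pair_big /=; apply: eq_bigr => [[i j]] _ /=.
  rewrite !inE /= andbC; congr (_ && _).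
  by move: i j => [[|[|[|[|[|//]]]]] ?] [[|[|[|[|[|//]]]]] ?].
rewrite !big_ord_recl !big_ord0 /=.
move: (_ \in U) (_ \in U) (_ \in U) (_ \in U) (_ \in U).
move: (_ \in V) (_ \in V) (_ \in V) (_ \in V) (_ \in V).
by do 10 case.
Qed.

Section Alg.
Variable F : fieldType.
Local Open Scope ring_scope.

Lemma tc_rank1 k1 k2 m n (G1 : 'M[F]_(k1, m)) (G2 : 'M[F]_(k2, n))
  (y1 : 'rV_k1) (y2 : 'rV_k2) :
  in_tensor_code G1 G2 (fun p => (y1 *m G1) 0 p.1 * (y2 *m G2) 0 p.2).
Proof.
exists (fun r => y1 0 r.1 * y2 0 r.2) => p.
rewrite !mxE big_distrlr /= pair_big /=; apply: eq_bigr => r _.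
by rewrite /kron mulrACA.
Qed.

Lemma tc_lin k1 k2 m n (G1 : 'M[F]_(k1, m)) (G2 : 'M[F]_(k2, n)) c1 c2 (a b : F) :
  in_tensor_code G1 G2 c1 -> in_tensor_code G1 G2 c2 ->
  in_tensor_code G1 G2 (fun p => a * c1 p + b * c2 p).
Proof.
move=> [x1 H1] [x2 H2]; exists (fun r => a * x1 r + b * x2 r) => p.
rewrite H1 H2 !mulr_sumr -big_split /=; apply: eq_bigr => r _.
by rewrite mulrDl !mulrA.
Qed.

Lemma tc_zero k1 k2 m n (G1 : 'M[F]_(k1, m)) (G2 : 'M[F]_(k2, n)) :
  in_tensor_code G1 G2 (fun _ => 0).
Proof. by exists (fun _ => 0) => p; rewrite big1 // => r _; rewrite mul0r. Qed.

Lemma two_zero k m (G : 'M[F]_(k, m)) (i1 i2 : 'I_m) :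
  (2 < \rank G)%N -> exists y : 'rV_k,
    (y *m G != 0) /\ (y *m G) 0 i1 = 0 /\ (y *m G) 0 i2 = 0.
Proof.
move=> rG.
pose P : 'M[F]_(m, 1 + 1) := row_mx (delta_mx i1 0) (delta_mx i2 0).
have rGP : (\rank (G *m P) < \rank G)%N.
  apply: leq_ltn_trans (mxrankM_maxr _ _) _.
  exact: leq_ltn_trans (rank_leq_col P) rG.
have nsub : ~~ (kermx (G *m P) <= kermx G)%MS.
  apply/negP => /mxrankS; rewrite !mxrank_ker.
  have := rank_leq_row G; lia.
have [i Hi] := row_subPn nsub.
exists (row i (kermx (G *m P))); split.
  by apply: contra Hi => /eqP /sub_kermxP.
have := sub_kermxP (row_sub i (kermx (G *m P))).
rewrite mulmxA mul_mx_row -!colE => /eqP; rewrite row_mx_eq0 => /andP[/eqP h1 /eqP h2].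
split.
  by move/matrixP: h1 => /(_ 0 0); rewrite !mxE.
by move/matrixP: h2 => /(_ 0 0); rewrite !mxE.
Qed.

Lemma nz_coord m (u : 'rV[F]_m) : u != 0 -> exists i, u 0 i != 0.
Proof.
move=> nz; apply/existsP; move: nz; apply: contraR => /existsPn H.
by apply/eqP/rowP => i; rewrite mxE; move: (H i); rewrite negbK => /eqP.
Qed.

End Alg.

Lemma S5_cases (i j : 'I_5) : (i, j) \in S5 ->
  [\/ (i = o0 \/ i = o1) /\ (j = o1 \/ j = o2),
      (i = o2 \/ i = o3) /\ (j = o0 \/ j = o3) | i = o4 /\ j = o4].
Proof.
rewrite !inE /= => /orP[/orP[|]|].
- by case/andP => /orP[/eqP->|/eqP->] /orP[/eqP->|/eqP->]; constructor 1; tauto.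
- by case/andP => /orP[/eqP->|/eqP->] /orP[/eqP->|/eqP->]; constructor 2; tauto.
- by case/eqP => -> ->; constructor 3.
Qed.

Local Open Scope ring_scope.

Lemma notcorrE5 : ~ correctable 2 2 E5.
Proof.
move=> [F [k1 [k2 [G1 [G2 [r1 [r2 Hc]]]]]]].
have r1' : (2 < \rank G1)%N by move: r1; rewrite /=; lia.
have r2' : (2 < \rank G2)%N by move: r2; rewrite /=; lia.
have fin : forall c, in_tensor_code G1 G2 c ->
    (forall i j, (i, j) \in S5 -> c (i, j) = 0) -> forall p, c p = 0.
  move=> c Hcode Hv p; apply: (Hc c (fun _ => 0) Hcode (tc_zero _ _)) => -[i j].
  by rewrite /E5 inE negbK; apply: Hv.
have [yz [zn [z0 z1]]] := two_zero o0 o1 r1'.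
have [yu [un [u2 u3]]] := two_zero o2 o3 r1'.
have [yv [vn [v0 v3]]] := two_zero o0 o3 r2'.
have [yw [wn [w1 w2]]] := two_zero o1 o2 r2'.
have [yx [xn [x4 _]]] := two_zero o4 o4 r2'.
move: zn un vn wn xn z0 z1 u2 u3 v0 v3 w1 w2 x4.
set z := yz *m G1; set u := yu *m G1; set v := yv *m G2; set w := yw *m G2;
set x := yx *m G2 => zn un vn wn xn z0 z1 u2 u3 v0 v3 w1 w2 x4.
have cz := tc_rank1 G1 G2 yz yv; have cu := tc_rank1 G1 G2 yu yw.
have cx := tc_rank1 G1 G2 yu yx.
rewrite -/z -/u -/v -/w -/x in cz cu cx.
have [i0 zi0] := nz_coord zn; have [j0 vj0] := nz_coord vn.
have [i1 ui1] := nz_coord un; have [j1 wj1] := nz_coord wn.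
have [j2 xj2] := nz_coord xn.
case: (eqVneq (z 0 o4 * v 0 o4) 0) => [zv4|zv4].
  have Hv : forall i j, (i, j) \in S5 -> z 0 (i, j).1 * v 0 (i, j).2 = 0.
    move=> i j /S5_cases /=.
    by case=> [[[->|->] _]|[_ [->|->]]|[-> ->]]; rewrite ?z0 ?z1 ?v0 ?v3 ?mul0r ?mulr0.
  have /= /eqP := fin _ cz Hv (i0, j0).
  by rewrite mulf_eq0 (negbTE zi0) (negbTE vj0).
case: (eqVneq (u 0 o4 * w 0 o4) 0) => [uw4|uw4].
  have Hv : forall i j, (i, j) \in S5 -> u 0 (i, j).1 * w 0 (i, j).2 = 0.
    move=> i j /S5_cases /=.
    by case=> [[_ [->|->]]|[[->|->] _]|[-> ->]]; rewrite ?u2 ?u3 ?w1 ?w2 ?mul0r ?mulr0.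
  have /= /eqP := fin _ cu Hv (i1, j1).
  by rewrite mulf_eq0 (negbTE ui1) (negbTE wj1).
have w4 : w 0 o4 != 0 by move: uw4; rewrite mulf_eq0 negb_or => /andP[].
have u4 : u 0 o4 != 0 by move: uw4; rewrite mulf_eq0 negb_or => /andP[].
have cc := tc_lin (u 0 o4 * w 0 o4) (- (z 0 o4 * v 0 o4)) cz cu.
have Hvc : forall i j, (i, j) \in S5 ->
    u 0 o4 * w 0 o4 * (z 0 (i, j).1 * v 0 (i, j).2) +
    - (z 0 o4 * v 0 o4) * (u 0 (i, j).1 * w 0 (i, j).2) = 0.
  move=> i j /S5_cases /=.
  case=> [[[->|->] [->|->]]|[[->|->] [->|->]]|[-> ->]];
    rewrite ?z0 ?z1 ?v0 ?v3 ?u2 ?u3 ?w1 ?w2 ?mul0r ?mulr0 ?addr0 ?add0r //.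
  by rewrite mulrC mulNr addrN.
have Hu01 : forall i, (i = o0 \/ i = o1) -> u 0 i = 0.
  move=> i Hi; apply/eqP; apply: contraLR isT => ui.
  have /= /eqP := fin _ cc Hvc (i, o4).
  have -> : z 0 i = 0 by case: Hi => ->.
  rewrite mul0r mulr0 add0r mulNr oppr_eq0 !mulf_eq0.
  move: zv4; rewrite mulf_eq0 negb_or => /andP[/negbTE-> /negbTE->].
  by rewrite (negbTE ui) (negbTE w4).
have Hvx : forall i j, (i, j) \in S5 -> u 0 (i, j).1 * x 0 (i, j).2 = 0.
  move=> i j /S5_cases /=.
  case=> [[[->|->] _]|[[->|->] _]|[-> ->]];
    by rewrite ?(Hu01 o0 (or_introl erefl)) ?(Hu01 o1 (or_intror erefl)) ?u2 ?u3 ?x4 ?mul0r ?mulr0.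
have /= /eqP := fin _ cx Hvx (o4, j2).
by rewrite mulf_eq0 (negbTE u4) (negbTE xj2).
Qed.

Theorem theorem3 :
  ~ (forall (m n a b : nat), (a < m)%N -> (b < n)%N ->
       forall E : {set 'I_m * 'I_n}, correctable a b E <-> regular a b E).
Proof.
move=> H; apply: notcorrE5.
by apply/(H 5 5 2 2 isT isT E5); exact: regE5.
Qed.
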